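(* Let $\mathfrak n$ be a 2-step nilpotent real Lie algebra with inner product $\langle\cdot,\cdot\rangle$, center $\mathfrak z$, $\mathfrak v=\mathfrak z^\perp$, commutator $C(\mathfrak n)=[\mathfrak n,\mathfrak n]$, and maps $j_Z$ as in the context. Let $F:\mathfrak n\to\mathfrak n$ be linear and write $F=F_1+F_2$ uniquely with $F_1(\mathfrak v)\subseteq\mathfrak v$, $F_1(\mathfrak z)\subseteq\mathfrak z$, $F_2(\mathfrak v)\subseteq\mathfrak z$, $F_2(\mathfrak z)\subseteq\mathfrak v$. Then: (i) a skew-symmetric $F$ gives rise to a closed 2-form $\omega(X,Y)=\langle F(X),Y\rangle$ if and only if $F_1$ and $F_2$ are skew-symmetric, $F_1(Z)$ is orthogonal to $C(\mathfrak n)$ for all $Z\in\mathfrak z$, and $\langle F_2(U),[V,W]\rangle+\langle F_2(V),[W,U]\rangle+\langle F_2(W),[U,V]\rangle=0$ for all $U,V,W\in\mathfrak v$; (ii) exact left-invariant 2-forms on $\mathfrak n$ (i.e. $d\eta$ for $\eta\in\mathfrak n^*$) are in one-to-one correspondence with the skew-symmetric maps $j_{\tilde Z}$ with $\tilde Z\in C(\mathfrak n)$ (the exact 2-form $d\ell_{\tilde Z}$, $\ell_{\tilde Z}=\langle\tilde Z,\cdot\rangle$, having Lorentz force $j_{\tilde Z}$ on $\mathfrak v$, extended by zero on $\mathfrak z$).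
   Context: A real Lie algebra is 2-step nilpotent if $[[U,V],W]=0$ for all $U,V,W$. For $Z\in\mathfrak z$, $j_Z:\mathfrak v\to\mathfrak v$ is defined by $\langle j_ZV,W\rangle=\langle Z,[V,W]\rangle$ for $V,W\in\mathfrak v$. For a left-invariant 1-form $\eta$, $d\eta(U,V)=-\eta([U,V])$ up to the sign convention; here $d\ell_{\tilde Z}(U,V)=\langle\tilde Z,[U,V]\rangle$. A 2-form $\omega$ on $\mathfrak n$ is closed iff $\omega([U,V],W)+\omega([V,W],U)+\omega([W,U],V)=0$ for all $U,V,W\in\mathfrak n$. *)

(* Defs.v *)
(* A finite-dimensional real inner-product space is modelled
   (up to isometry) as 'rV[R]_n with the standard dot product, R : realType. *)
From HB Require Import structures.
From mathcomp Require Import all_boot all_order all_algebra.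
From mathcomp Require Import reals.
Set Implicit Arguments. Unset Strict Implicit. Unset Printing Implicit Defensive.
Import Order.TTheory GRing.Theory Num.Theory.
Local Open Scope ring_scope.

Section Defs.
Variables (R : realType) (n : nat).
Notation vec := 'rV[R]_n.

Definition ip (u v : vec) : R := (u *m v^T) 0 0.

Definition two_step_nilpotent_lie (br : vec -> vec -> vec) : Prop :=
  [/\ (forall (a : R) (x y z : vec), br (a *: x + y) z = a *: br x z + br y z),
      (forall (a : R) (x y z : vec), br z (a *: x + y) = a *: br z x + br z y),
      (forall x : vec, br x x = 0),
      (forall x y z : vec, br x (br y z) + br y (br z x) + br z (br x y) = 0)
    & (forall u v w : vec, br (br u v) w = 0)].

Definition in_center (br : vec -> vec -> vec) (x : vec) : Prop :=
  forall y, br x y = 0.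

Definition in_vpart (br : vec -> vec -> vec) (x : vec) : Prop :=
  forall z, in_center br z -> ip x z = 0.

Definition in_commutator (br : vec -> vec -> vec) (x : vec) : Prop :=
  exists (k : nat) (us vs : 'I_k -> vec), x = \sum_(i < k) br (us i) (vs i).

(* linear maps n -> n are matrices acting on the right: F(X) = X *m F *)
Definition skew_sym (F : 'M[R]_n) : Prop :=
  forall x y : vec, ip (x *m F) y = - ip x (y *m F).

Definition closed_form (br : vec -> vec -> vec) (om : vec -> vec -> R) : Prop :=
  forall u v w : vec,
    om (br u v) w + om (br v w) u + om (br w u) v = 0.

(* exterior derivative of the left-invariant 1-form eta (eta : n^*, given by a
   column vector: eta(X) = X *m eta), convention d eta(U,V) = eta([U,V]),
   so that d l_Z (U,V) = <Z,[U,V]>. *)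
Definition dform (br : vec -> vec -> vec) (eta : 'cV[R]_n) (u v : vec) : R :=
  (br u v *m eta) 0 0.

Definition ell (z : vec) : 'cV[R]_n := z^T.

(* j_Z : the matrix with <j_Z X, Y> = <Z,[X,Y]> for all X,Y (on v it is the
   map of the paper; it automatically vanishes on z, i.e. it is j_Z extended
   by zero). Entry (i,j) = <Z,[e_i,e_j]>. *)
Definition jmap (br : vec -> vec -> vec) (z : vec) : 'M[R]_n :=
  \matrix_(i < n, j < n) ip z (br (delta_mx 0 i) (delta_mx 0 j)).

End Defs.

(* Main.v *)
Require Import Defs.
From HB Require Import structures.
From mathcomp Require Import all_boot all_order all_algebra.
From mathcomp Require Import reals.
From mathcomp Require Import zify ring lra.
Set Implicit Arguments. Unset Strict Implicit. Unset Printing Implicit Defensive.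
Import Order.TTheory GRing.Theory Num.Theory.
Local Open Scope ring_scope.

Section Aux.
Variables (R : realType) (n : nat).
Notation vec := 'rV[R]_n.

Lemma ipC (x y : vec) : ip x y = ip y x.
Proof. by rewrite /ip -[x *m _]trmxK trmx_mul trmxK mxE. Qed.

Lemma ipDl (x y z : vec) : ip (x + y) z = ip x z + ip y z.
Proof. by rewrite /ip mulmxDl mxE. Qed.
Lemma ipDr (x y z : vec) : ip z (x + y) = ip z x + ip z y.
Proof. by rewrite /ip linearD mulmxDr mxE. Qed.
Lemma ipZl a (x z : vec) : ip (a *: x) z = a * ip x z.
Proof. by rewrite /ip -scalemxAl mxE. Qed.
Lemma ipZr a (x z : vec) : ip z (a *: x) = a * ip z x.
Proof. by rewrite ipC ipZl ipC. Qed.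
Lemma ipNl (x z : vec) : ip (- x) z = - ip x z.
Proof. by rewrite -scaleN1r ipZl mulN1r. Qed.
Lemma ipNr (x z : vec) : ip z (- x) = - ip z x.
Proof. by rewrite ipC ipNl ipC. Qed.
Lemma ipBr (x y z : vec) : ip z (x - y) = ip z x - ip z y.
Proof. by rewrite ipDr ipNr. Qed.
Lemma ip0r (z : vec) : ip z 0 = 0.
Proof. by rewrite /ip trmx0 mulmx0 mxE. Qed.
Lemma ip0l (z : vec) : ip 0 z = 0.
Proof. by rewrite ipC ip0r. Qed.
Lemma ip_sumr (I : finType) (f : I -> vec) z : ip z (\sum_i f i) = \sum_i ip z (f i).
Proof.
apply: (big_ind2 (fun a b => ip z a = b)); first exact: ip0r.
  by move=> ? ? ? ? <- <-; rewrite ipDr.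
by [].
Qed.

Lemma ip_self_eq0 (y : vec) : ip y y = 0 -> y = 0.
Proof.
rewrite /ip mxE => H; apply/rowP => k; rewrite mxE.
have P0 : forall j, predT j -> 0 <= y 0 j * y^T j 0.
  by move=> j _; rewrite mxE -expr2 sqr_ge0.
have := @psumr_eq0P _ _ predT (fun j => y 0 j * y^T j 0) P0 H k isT.
by rewrite mxE => /eqP; rewrite mulf_eq0 orbb => /eqP.
Qed.

Lemma decomp m (A : 'M[R]_(m, n)) (x : vec) : exists w : 'rV_m, (x - w *m A) *m A^T = 0.
Proof.
have sK : (kermx (A *m A^T) <= kermx A)%MS.
  apply/sub_kermxP; apply/row_matrixP => i; rewrite row_mul row0.
  have /sub_kermxP K := submx_refl (kermx (A *m A^T)).
  have : row i (kermx (A *m A^T) *m (A *m A^T)) = 0 by rewrite K row0.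
  rewrite row_mul mulmxA => H0.
  apply: ip_self_eq0; rewrite /ip trmx_mul mulmxA H0 mul0mx mxE //.
have r1 := mxrankS sK; rewrite !mxrank_ker in r1.
have r2 : (\rank A <= \rank (A *m A^T))%N by have := rank_leq_row A; have := rank_leq_row (A *m A^T); lia.
have sub1 : (A *m A^T <= A^T)%MS by apply: submxMl.
have /leqifP := mxrank_leqif_sup sub1; rewrite mxrank_tr.
case: ifP => [H _ | _]; last by move=> lt; have := leq_trans lt r2; rewrite ltnn.
have /submxP [w Hw] : (x *m A^T <= A *m A^T)%MS by apply: submx_trans H; apply: submxMl.
exists w; by rewrite mulmxBl Hw mulmxA subrr.
Qed.


Section Lie.
Variable br : vec -> vec -> vec.
Hypothesis Hlie : two_step_nilpotent_lie br.
Let Hl := Hlie.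
Let H1 : forall (a : R) (x y z : vec), br (a *: x + y) z = a *: br x z + br y z.
Proof. by case: Hl. Qed.
Let H2 : forall (a : R) (x y z : vec), br z (a *: x + y) = a *: br z x + br z y.
Proof. by case: Hl. Qed.
Let H3 : forall x : vec, br x x = 0.
Proof. by case: Hl. Qed.
Let H5 : forall u v w : vec, br (br u v) w = 0.
Proof. by case: Hl. Qed.

Lemma brDl x y z : br (x + y) z = br x z + br y z.
Proof. have := H1 1 x y z; by rewrite !scale1r. Qed.
Lemma brDr x y z : br z (x + y) = br z x + br z y.
Proof. have := H2 1 x y z; by rewrite !scale1r. Qed.
Lemma br0l z : br 0 z = 0.
Proof. have h := brDl 0 0 z; rewrite addr0 in h; apply: (addrI (br 0 z)). by rewrite addr0 -h. Qed.
Lemma br0r z : br z 0 = 0.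
Proof. have h := brDr 0 0 z; rewrite addr0 in h; apply: (addrI (br z 0)). by rewrite addr0 -h. Qed.
Lemma brZl a x z : br (a *: x) z = a *: br x z.
Proof. by move: H1 => H; rewrite -[a *: x]addr0 H br0l addr0. Qed.
Lemma brZr a x z : br z (a *: x) = a *: br z x.
Proof. by move: H2 => H; rewrite -[a *: x]addr0 H br0r addr0. Qed.
Lemma brA x y : br x y = - br y x.
Proof.
move: H3 => H; apply/eqP; rewrite -subr_eq0 opprK.
have := H (x + y); rewrite brDl !brDr !H add0r addr0 => ->. by [].
Qed.
Lemma br_suml (I : finType) (f : I -> vec) z : br (\sum_i f i) z = \sum_i br (f i) z.
Proof.
apply: (big_ind2 (fun a b => br a z = b)); first exact: br0l.
  by move=> ? ? ? ? <- <-; rewrite brDl.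
by [].
Qed.
Lemma br_sumr (I : finType) (f : I -> vec) z : br z (\sum_i f i) = \sum_i br z (f i).
Proof.
apply: (big_ind2 (fun a b => br z a = b)); first exact: br0r.
  by move=> ? ? ? ? <- <-; rewrite brDr.
by [].
Qed.
Lemma br_central u v : in_center br (br u v).
Proof. by move: H5 => H y; apply: H. Qed.
Lemma central_r z y : in_center br z -> br y z = 0.
Proof. by move=> Hz; rewrite brA Hz oppr0. Qed.
Lemma br_expand u v : br u v = \sum_i \sum_j (u 0 i * v 0 j) *: br 'e_i 'e_j.
Proof.
rewrite {1}[u]row_sum_delta br_suml; apply: eq_bigr => i _.
rewrite {1}[v]row_sum_delta br_sumr; apply: eq_bigr => j _.
by rewrite brZl brZr scalerA mulrC.
Qed.


Definition Mj (j : 'I_n) : 'M[R]_n := \matrix_(i < n) br 'e_i 'e_j.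
Definition Zm : 'M[R]_n := (\bigcap_(j < n) kermx (Mj j))%MS.

Lemma Mj_mul x j : x *m Mj j = br x 'e_j.
Proof.
rewrite mulmx_sum_row {2}[x]row_sum_delta br_suml; apply: eq_bigr => i _.
by rewrite rowK brZl.
Qed.

Lemma center_Z x : in_center br x <-> (x <= Zm)%MS.
Proof.
split=> [Hx | /sub_bigcapmxP Hx y].
  by apply/sub_bigcapmxP => j _; apply/sub_kermxP; rewrite Mj_mul Hx.
rewrite [y]row_sum_delta br_sumr big1 // => j _.
by rewrite brZr -Mj_mul; have /sub_kermxP -> := Hx j isT; rewrite scaler0.
Qed.

Lemma decomp_zv x : exists xz xv, [/\ x = xz + xv, in_center br xz & in_vpart br xv].
Proof.
have [w Hw] := decomp Zm x.
exists (w *m Zm), (x - w *m Zm); split.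
- by rewrite addrC subrK.
- by apply/center_Z; apply: submxMl.
- move=> c /center_Z /submxP [D ->].
  by rewrite /ip trmx_mul mulmxA Hw mul0mx mxE.
Qed.

Definition Cm : 'M[R]_(#|{: 'I_n * 'I_n}|, n) :=
  \matrix_(k < #|{: 'I_n * 'I_n}|) br 'e_(enum_val k).1 'e_(enum_val k).2.

Lemma Cm_comm w : in_commutator br (w *m Cm).
Proof.
exists #|{: 'I_n * 'I_n}|, (fun k => w 0 k *: 'e_(enum_val k).1), (fun k => 'e_(enum_val k).2).
rewrite mulmx_sum_row; apply: eq_bigr => k _; by rewrite rowK brZl.
Qed.

Lemma Cm_orth b : b *m Cm^T = 0 -> forall u v, ip b (br u v) = 0.
Proof.
move=> Hb u v; rewrite br_expand ip_sumr big1 // => i _; rewrite ip_sumr big1 // => j _.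
rewrite ipZr.
have -> : br 'e_i 'e_j = row (enum_rank (i, j)) Cm by rewrite rowK enum_rankK.
rewrite (_ : ip b (row _ Cm) = 0) ?mulr0 //.
transitivity ((b *m Cm^T) 0 (enum_rank (i, j))).
  by rewrite /ip !mxE; apply: eq_bigr => l _; rewrite !mxE.
by rewrite Hb mxE.
Qed.

Lemma comm_orth c d : in_commutator br c -> (forall u v, ip d (br u v) = 0) -> ip d c = 0.
Proof.
by move=> [k [us [vs ->]]] H; rewrite ip_sumr big1 // => i _; apply: H.
Qed.

Lemma comm_uniq z1 z2 : in_commutator br z1 -> in_commutator br z2 ->
  (forall u v, ip z1 (br u v) = ip z2 (br u v)) -> z1 = z2.
Proof.
move=> C1 C2 H; apply/eqP; rewrite -subr_eq0; apply/eqP; apply: ip_self_eq0.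
have K : forall u v, ip (z1 - z2) (br u v) = 0.
  by move=> u v; rewrite ipC ipBr ipC (ipC _ z2) H subrr.
by rewrite ipBr (comm_orth C1 K) (comm_orth C2 K) subrr.
Qed.

Lemma ip_jmap z u v : ip (u *m jmap br z) v = ip z (br u v).
Proof.
rewrite br_expand ip_sumr.
under [RHS]eq_bigr do rewrite ip_sumr.
under [RHS]eq_bigr do under eq_bigr do rewrite ipZr.
transitivity (\sum_j (\sum_i u 0 i * jmap br z i j) * v 0 j).
  by rewrite /ip mxE; apply: eq_bigr => j _; rewrite !mxE.
rewrite (eq_bigr (fun j => \sum_i u 0 i * jmap br z i j * v 0 j)); last by move=> j _; rewrite big_distrl.
rewrite exchange_big; apply: eq_bigr => i _; apply: eq_bigr => j _.
by rewrite !mxE mulrAC.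
Qed.

Lemma oZV c x : in_center br c -> in_vpart br x -> ip c x = 0.
Proof. by move=> Hc Hx; rewrite ipC; apply: Hx. Qed.
Lemma oVZ c x : in_center br c -> in_vpart br x -> ip x c = 0.
Proof. by move=> Hc Hx; apply: Hx. Qed.

Lemma skew_from (G : 'M[R]_n) :
  (forall x y, in_center br x \/ in_vpart br x -> in_center br y \/ in_vpart br y ->
     ip (x *m G) y = - ip x (y *m G)) -> skew_sym G.
Proof.
move=> H x y.
have [xz [xv [-> Hxz Hxv]]] := decomp_zv x.
have [yz [yv [-> Hyz Hyv]]] := decomp_zv y.
rewrite !mulmxDl !ipDl !ipDr.
rewrite (H xz yz) ?(H xz yv) ?(H xv yz) ?(H xv yv); try by [left | right].
ring.
Qed.

Lemma br_vpart u v uz uv vz vv : u = uz + uv -> v = vz + vv ->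
  in_center br uz -> in_center br vz -> br u v = br uv vv.
Proof.
move=> -> -> Hu Hv; rewrite brDl Hu add0r brDr (central_r _ Hv) add0r //.
Qed.

Lemma part_i (F F1 F2 : 'M[R]_n) :
     skew_sym F -> F = F1 + F2 ->
     (forall x, in_vpart br x -> in_vpart br (x *m F1)) ->
     (forall x, in_center br x -> in_center br (x *m F1)) ->
     (forall x, in_vpart br x -> in_center br (x *m F2)) ->
     (forall x, in_center br x -> in_vpart br (x *m F2)) ->
     (closed_form br (fun x y => ip (x *m F) y) <->
      [/\ skew_sym F1, skew_sym F2,
          (forall z, in_center br z -> forall u v, ip (z *m F1) (br u v) = 0)
        & (forall u v w, in_vpart br u -> in_vpart br v -> in_vpart br w ->
             ip (u *m F2) (br v w) + ip (v *m F2) (br w u)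
             + ip (w *m F2) (br u v) = 0)]).
Proof.
move=> skF EF P1v P1z P2v P2z.
have eF1 x : x *m F1 = x *m F - x *m F2 by rewrite EF mulmxDr addrK.
have eF2 x : x *m F2 = x *m F - x *m F1 by rewrite EF mulmxDr addrAC subrr add0r.
have eF x : x *m F = x *m F1 + x *m F2 by rewrite EF mulmxDr.
have sk1 : skew_sym F1.
  apply: skew_from => x y [Hx|Hx] [Hy|Hy].
  - rewrite !eF1 ipDl ipDr ipNl ipNr (oVZ Hy (P2z _ Hx)) (oZV Hx (P2z _ Hy)) skF.
    by rewrite !subr0.
  - by rewrite (oZV (P1z _ Hx) Hy) (oZV Hx (P1v _ Hy)) oppr0.
  - by rewrite (oVZ Hy (P1v _ Hx)) (oVZ (P1z _ Hy) Hx) oppr0.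
  - rewrite !eF1 ipDl ipDr ipNl ipNr (oZV (P2v _ Hx) Hy) (oVZ (P2v _ Hy) Hx) skF.
    by rewrite !subr0.
have sk2 : skew_sym F2.
  apply: skew_from => x y [Hx|Hx] [Hy|Hy].
  - by rewrite (oVZ Hy (P2z _ Hx)) (oZV Hx (P2z _ Hy)) oppr0.
  - rewrite !eF2 ipDl ipDr ipNl ipNr (oZV (P1z _ Hx) Hy) (oZV Hx (P1v _ Hy)) skF.
    by rewrite !subr0.
  - rewrite !eF2 ipDl ipDr ipNl ipNr (oVZ Hy (P1v _ Hx)) (oVZ (P1z _ Hy) Hx) skF.
    by rewrite !subr0.
  - by rewrite (oZV (P2v _ Hx) Hy) (oVZ (P2v _ Hy) Hx) oppr0.
have skE c w : ip (c *m F) w = - ip c (w *m F) by apply: skF.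
split.
- rewrite /closed_form /= => Hc; split => //.
  + move=> z Hz u v; have := Hc u v z.
    rewrite (central_r _ Hz) Hz !mul0mx !ip0l !addr0 skE eF ipDr.
    rewrite (oZV (br_central u v) (P2z _ Hz)) addr0 ipC => /eqP; rewrite oppr_eq0 => /eqP //.
  + move=> u v w Hu Hv Hw; have := Hc u v w.
    rewrite !skE !eF !ipDr (oZV (br_central _ _) (P1v _ Hu)) (oZV (br_central _ _) (P1v _ Hv)).
    rewrite (oZV (br_central _ _) (P1v _ Hw)) !add0r !(ipC (br _ _)) => E.
    lra.
- case=> _ _ C3 C4 u v w /=.
  have [uz [uv [Eu Huz Huv]]] := decomp_zv u.
  have [vz [vv [Ev Hvz Hvv]]] := decomp_zv v.
  have [wz [wv [Ew Hwz Hwv]]] := decomp_zv w.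
  have red a b x xz xv : x = xz + xv -> in_center br xz -> in_vpart br xv ->
      ip (br a b *m F) x = - ip (xv *m F2) (br a b).
    move=> -> Hxz Hxv; rewrite skE mulmxDl !eF !ipDr.
    rewrite (ipC _ (xz *m F1)) (C3 _ Hxz) (oZV (br_central _ _) (P2z _ Hxz)).
    by rewrite (oZV (br_central _ _) (P1v _ Hxv)) (ipC _ (xv *m F2)) !add0r.
  rewrite (red _ _ _ _ _ Ew Hwz Hwv) (red _ _ _ _ _ Eu Huz Huv) (red _ _ _ _ _ Ev Hvz Hvv).
  rewrite (br_vpart Eu Ev Huz Hvz) (br_vpart Ev Ew Hvz Hwz) (br_vpart Ew Eu Hwz Huz).
  have := C4 _ _ _ Huv Hvv Hwv => E.
  lra.
Qed.

Lemma part_ii :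
  [/\ (forall eta : 'cV[R]_n,
         exists! z, in_commutator br z /\
           (forall u v, dform br eta u v = dform br (ell z) u v)),
      (forall z, in_commutator br z ->
         [/\ (forall u v, dform br (ell z) u v = ip (u *m jmap br z) v),
             skew_sym (jmap br z),
             (forall x, in_vpart br x -> in_vpart br (x *m jmap br z))
           & (forall x, in_center br x -> x *m jmap br z = 0)])
    & (forall z1 z2, in_commutator br z1 -> in_commutator br z2 ->
         jmap br z1 = jmap br z2 -> z1 = z2)].
Proof.
have dE eta u v : dform br eta u v = ip (br u v) eta^T by rewrite /dform /ip trmxK.
have dEl z u v : dform br (ell z) u v = ip (br u v) z by [].
split.
- move=> eta; have [w Hw] := decomp Cm eta^T.
  have O := Cm_orth Hw.
  exists (w *m Cm); split.
    split; first exact: Cm_comm.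
    move=> u v; rewrite dE dEl; apply/eqP; rewrite -subr_eq0 -ipBr ipC O //.
  move=> y [Cy Hy]; apply: comm_uniq => //; first exact: Cm_comm.
  move=> u v; rewrite ipC -dEl (ipC y) -dEl.
  have E1 : dform br eta u v = ip (br u v) (w *m Cm).
    rewrite dE; apply/eqP; rewrite -subr_eq0 -ipBr ipC O //.
  by rewrite dEl -E1 Hy.
- move=> z Cz; split.
  + by move=> u v; rewrite dEl ip_jmap ipC.
  + by move=> x y; rewrite ip_jmap (ipC x) ip_jmap brA ipNr.
  + by move=> x Hx c Hc; rewrite ip_jmap (central_r _ Hc) ip0r.
  + by move=> x Hx; apply: ip_self_eq0; rewrite ip_jmap Hx ip0r.
- move=> z1 z2 C1 C2 EJ; apply: comm_uniq => // u v.
  by rewrite -!ip_jmap EJ.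
Qed.

End Lie.
End Aux.

Theorem mainTheorem3 (R : realType) (n : nat) (br : 'rV[R]_n -> 'rV[R]_n -> 'rV[R]_n)
  (Hlie : two_step_nilpotent_lie br) :
  (* (i) *)
  (forall F F1 F2 : 'M[R]_n,
     skew_sym F -> F = F1 + F2 ->
     (forall x, in_vpart br x -> in_vpart br (x *m F1)) ->
     (forall x, in_center br x -> in_center br (x *m F1)) ->
     (forall x, in_vpart br x -> in_center br (x *m F2)) ->
     (forall x, in_center br x -> in_vpart br (x *m F2)) ->
     (closed_form br (fun x y => ip (x *m F) y) <->
      [/\ skew_sym F1, skew_sym F2,
          (forall z, in_center br z -> forall u v, ip (z *m F1) (br u v) = 0)
        & (forall u v w, in_vpart br u -> in_vpart br v -> in_vpart br w ->
             ip (u *m F2) (br v w) + ip (v *m F2) (br w u)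
             + ip (w *m F2) (br u v) = 0)])) /\
  (* (ii) *)
  [/\ (* every exact 2-form d eta is d l_Z for a unique Z in C(n) *)
      (forall eta : 'cV[R]_n,
         exists! z, in_commutator br z /\
           (forall u v, dform br eta u v = dform br (ell z) u v)),
      (* the Lorentz force of d l_Z is j_Z (on v, extended by zero on z),
         which is skew_sym-symmetric *)
      (forall z, in_commutator br z ->
         [/\ (forall u v, dform br (ell z) u v = ip (u *m jmap br z) v),
             skew_sym (jmap br z),
             (forall x, in_vpart br x -> in_vpart br (x *m jmap br z))
           & (forall x, in_center br x -> x *m jmap br z = 0)])
    & (* Z |-> j_Z is injective on C(n) *)
      (forall z1 z2, in_commutator br z1 -> in_commutator br z2 ->
         jmap br z1 = jmap br z2 -> z1 = z2)].
Proof.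
split; first exact: (part_i Hlie).
exact: (part_ii Hlie).
Qed.
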